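(* Let $\mathscr Q_n$ be a non-singular quadric in $\mathrm{PG}(n,2)$ of projective index $g\ge1$, let $0\le s<g$, and let $\alpha_s$ be an $s$-dimensional subspace contained in $\mathscr Q_n$. Then every generator of $\mathscr Q_n$ contains at least one point of type (ii).
   Context: A non-singular quadric $\mathscr Q_n$ in $\mathrm{PG}(n,2)$ is the point set of a non-degenerate quadric; its projective index $g$ is the largest dimension of a projective subspace contained in $\mathscr Q_n$, and the $g$-dimensional subspaces contained in $\mathscr Q_n$ are its generators. A point $X$ of $\mathscr Q_n$ has type (ii) (with respect to $\alpha_s$) if $X\notin\alpha_s$ and the $(s+1)$-space $\langle\alpha_s,X\rangle$ is contained in $\mathscr Q_n$. *)

(* Defs.v *)
From HB Require Import structures.
From mathcomp Require Import all_boot all_order all_algebra.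
Set Implicit Arguments. Unset Strict Implicit. Unset Printing Implicit Defensive.
Import GRing.Theory.
Local Open Scope ring_scope.

(* PG(n,2) is modelled on V = 'rV['F_2]_(n.+1); since the field is GF(2),
   projective points are exactly the nonzero vectors, and a projective
   subspace of dimension d is (the row space of) a matrix of rank d+1. *)

(* The quadratic form with coefficient matrix A : Q(x) = x A x^T.
   Every quadratic form over F_2 arises in this way. *)
Definition qf (n : nat) (A : 'M['F_2]_(n.+1)) (x : 'rV['F_2]_(n.+1)) : 'F_2 :=
  (x *m A *m x^T) 0 0.

Definition polar (n : nat) (A : 'M['F_2]_(n.+1)) (x y : 'rV['F_2]_(n.+1)) : 'F_2 :=
  qf A (x + y) - qf A x - qf A y.

Definition nonsingular (n : nat) (A : 'M['F_2]_(n.+1)) : Prop :=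
  forall x : 'rV['F_2]_(n.+1), x != 0 -> qf A x = 0 ->
    exists y, polar A x y != 0.

Definition contained (n : nat) (A : 'M['F_2]_(n.+1)) (m : nat)
  (U : 'M['F_2]_(m, n.+1)) : Prop :=
  forall x : 'rV['F_2]_(n.+1), (x <= U)%MS -> qf A x = 0.

Definition proj_index (n : nat) (A : 'M['F_2]_(n.+1)) (g : nat) : Prop :=
  (exists U : 'M['F_2]_(n.+1), \rank U = g.+1 /\ contained A U) /\
  (forall U : 'M['F_2]_(n.+1), contained A U -> (\rank U <= g.+1)%N).

Definition generator (n : nat) (A : 'M['F_2]_(n.+1)) (g : nat)
  (G : 'M['F_2]_(n.+1)) : Prop :=
  \rank G = g.+1 /\ contained A G.

Definition type_ii (n : nat) (A : 'M['F_2]_(n.+1)) (alpha : 'M['F_2]_(n.+1))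
  (X : 'rV['F_2]_(n.+1)) : Prop :=
  [/\ X != 0, qf A X = 0, ~~ (X <= alpha)%MS & contained A (alpha + X)%MS].

(* Main.v *)
Require Import Defs.
From mathcomp Require Import all_boot all_order all_algebra.
From mathcomp Require Import ring zify.
Set Implicit Arguments. Unset Strict Implicit. Unset Printing Implicit Defensive.
Import GRing.Theory.
Local Open Scope ring_scope.

Section Aux.
Variables (n : nat) (A : 'M['F_2]_(n.+1)).
Let B := A + A^T.
Definition bil (x y : 'rV['F_2]_(n.+1)) : 'F_2 := (x *m B *m y^T) 0 0.

Lemma Bsym : B^T = B.
Proof. by rewrite /B linearD /= trmxK addrC. Qed.

Lemma qfD x y : qf A (x + y) = qf A x + qf A y + bil x y.
Proof.
rewrite /qf /bil /B linearD /= !mulmxDl !mulmxDr !mulmxDl.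
have -> : y *m A *m x^T = (x *m A^T *m y^T)^T.
  by rewrite !trmx_mul !trmxK mulmxA.
set a := x *m A *m x^T; set b := x *m A *m y^T; set c := x *m A^T *m y^T.
set d := y *m A *m y^T.
rewrite !mxE.
ring.
Qed.

Lemma bil0 (m : nat) (G : 'M['F_2]_(m, n.+1)) x y :
  contained A G -> (x <= G)%MS -> (y <= G)%MS -> bil x y = 0.
Proof.
move=> cG xG yG.
have := qfD x y; rewrite (cG _ xG) (cG _ yG) cG ?addmx_sub //.
by rewrite !add0r => ->.
Qed.

Lemma entry_row (m : nat) (x : 'rV['F_2]_(n.+1)) (N : 'M['F_2]_(n.+1)) (M : 'M['F_2]_(m, n.+1)) j :
  (x *m N *m M^T) 0 j = (x *m N *m (row j M)^T) 0 0.
Proof. rewrite !mxE; apply: eq_bigr => k _; by rewrite !mxE. Qed.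

End Aux.

Theorem lemma5p3 (n : nat) (A : 'M['F_2]_(n.+1)) (g s : nat)
  (alpha : 'M['F_2]_(n.+1)) :
  nonsingular A -> proj_index A g -> (1 <= g)%N -> (s < g)%N ->
  \rank alpha = s.+1 -> contained A alpha ->
  forall G : 'M['F_2]_(n.+1), generator A g G ->
    exists X : 'rV['F_2]_(n.+1), (X <= G)%MS /\ type_ii A alpha X.
Proof.
move=> _ _ g1 sg ra ca G [rG cG].
pose B := A + A^T.
have BT : B^T = B by exact: Bsym.
pose K := B *m alpha^T.
pose W := (G :&: kermx K)%MS.
case: (boolP [exists i, ~~ (row i W <= alpha)%MS]) => [/existsP [i Hi] | /existsPn H].
  pose X := row i W.
  have XW : (X <= W)%MS by exact: row_sub.
  have XG : (X <= G)%MS by apply: submx_trans XW (capmxSl _ _).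
  have XK : X *m K = 0.
    apply/eqP; rewrite -sub_kermx; exact: submx_trans XW (capmxSr _ _).
  exists X; split=> //; split.
  - apply/negP => /eqP X0; move: Hi; by rewrite -/X X0 sub0mx.
  - exact: cG.
  - exact: Hi.
  - move=> v /sub_addsmxP [u ->].
    rewrite qfD (ca _ (submxMl _ _)) (cG _ (submx_trans (submxMl _ _) XG)).
    rewrite /bil -/B.
    have -> : u.1 *m alpha *m B *m (u.2 *m X)^T
            = u.1 *m (X *m K)^T *m u.2^T.
      by rewrite /K trmx_mul !trmx_mul trmxK BT !mulmxA.
    by rewrite XK trmx0 mulmx0 mul0mx mxE !add0r.
have WA : (W <= alpha)%MS by apply/row_subP => i; move: (H i); rewrite negbK.
pose K' := B *m G^T.
have GK' : (G <= kermx K')%MS.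
  rewrite sub_kermx; apply/eqP/row_matrixP => i; rewrite row_mul row0.
  apply/rowP => j; rewrite /K' mulmxA entry_row [RHS]mxE.
  exact: (bil0 cG (row_sub _ _) (row_sub _ _)).
have D_le : (alpha :&: G <= alpha :&: kermx K')%MS by apply: capmxS.
have h1 := mxrank_mul_ker G K.
have h2 : \rank (G *m K) = \rank (alpha *m K').
  by rewrite -mxrank_tr /K /K' trmx_mul trmx_mul trmxK BT mulmxA.
have h3 := mxrank_mul_ker alpha K'.
have h4 := mxrankS D_le.
have h5 : (\rank W <= \rank (alpha :&: G))%N.
  by apply: mxrankS; rewrite sub_capmx WA capmxSl.
rewrite -/W in h1; exfalso.
move: h1 h2 h3 h4 h5 ra rG sg.
set r1 := \rank (G *m K); set r2 := \rank (alpha *m K'); set r3 := \rank (alpha :&: kermx K')%MS.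
set r4 := \rank (alpha :&: G)%MS; set r5 := \rank W.
move=> h1 h2 h3 h4 h5 ra rG sg; lia.
Qed.
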